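(* Let $a>0$, $p>1$, and let $\phi\in C^1((0,a])\cap C^0([0,a])$ satisfy $\phi(0)=0$, $\phi(t)>0$ for $t\in(0,a]$, and $c_1t^{p-1+\delta}\le\phi(t)\le c_2t^{p-1+\delta}$ for all $t\in(0,a]$, for some constants $c_1,c_2,\delta>0$. Suppose moreover that $\phi$ is twice differentiable in $(0,a)$ and $(\log\phi)''(t)=(\phi'/\phi)'(t)<0$ for all $t\in(0,a)$. Let $\eta_a(t)=\phi(t)^{-\frac1{p-1}}\big/\int_t^a\phi(\sigma)^{-\frac1{p-1}}\,d\sigma$ for $t\in(0,a)$. Then there exists a unique $T\in(0,a)$ such that $\eta_a'(t)<0$ for $t\in(0,T)$ and $\eta_a'(t)>0$ for $t\in(T,a)$. *)

(* Defs.v *)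
From Stdlib Require Import Reals Lra.
From Coquelicot Require Import Coquelicot.
Open Scope R_scope.

Definition continuous_within (D : R -> Prop) (f : R -> R) (x : R) : Prop :=
  forall eps : R, 0 < eps -> exists delta : R, 0 < delta /\
    forall y : R, D y -> Rabs (y - x) < delta -> Rabs (f y - f x) < eps.

Definition is_derive_within (D : R -> Prop) (f : R -> R) (x l : R) : Prop :=
  forall eps : R, 0 < eps -> exists delta : R, 0 < delta /\
    forall y : R, D y -> Rabs (y - x) < delta ->
      Rabs (f y - f x - l * (y - x)) <= eps * Rabs (y - x).

Definition C0_closed (a : R) (phi : R -> R) : Prop :=
  forall t, 0 <= t <= a -> continuous_within (fun s => 0 <= s <= a) phi t.

Definition C1_half_open (a : R) (phi : R -> R) : Prop :=
  exists dphi : R -> R,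
    (forall t, 0 < t <= a -> is_derive_within (fun s => 0 < s <= a) phi t (dphi t)) /\
    (forall t, 0 < t <= a -> continuous_within (fun s => 0 < s <= a) dphi t).

Definition eta_a (a p : R) (phi : R -> R) (t : R) : R :=
  Rpower (phi t) (- / (p - 1)) /
  RInt (fun s => Rpower (phi s) (- / (p - 1))) t a.

(* Main.v *)
Require Import Defs.
From Stdlib Require Import Reals Lra Classical Ranalysis5.
From Coquelicot Require Import Coquelicot.
Open Scope R_scope.

Lemma Rmin_lip y s a : Rabs (Rmin y a - Rmin s a) <= Rabs (y - s).
Proof.
  unfold Rmin; destruct (Rle_dec y a), (Rle_dec s a);
  unfold Rabs; repeat destruct Rcase_abs; lra.
Qed.

Lemma cpt_epsdelta f x : continuity_pt f x ->
  forall eps, 0 < eps -> exists d, 0 < d /\ forall y, Rabs (y - x) < d -> Rabs (f y - f x) < eps.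
Proof.
  intros H eps Heps. destruct (H eps Heps) as [d [Hd Hy]]. exists d; split; [lra|].
  intros y Hyx. destruct (Req_dec x y) as [<-|Hne].
  - rewrite Rminus_eq_0, Rabs_R0; lra.
  - apply (Hy y). split; [split; [exact I|exact Hne]|exact Hyx].
Qed.

Lemma epsdelta_cpt f x :
  (forall eps, 0 < eps -> exists d, 0 < d /\ forall y, Rabs (y - x) < d -> Rabs (f y - f x) < eps) ->
  continuity_pt f x.
Proof.
  intros H eps Heps. destruct (H eps Heps) as [d [Hd Hy]]. exists d; split; [lra|].
  intros y [_ Hyx]. apply Hy. exact Hyx.
Qed.

Lemma der_cpt (f : R -> R) (x l : R) : is_derive f x l -> continuity_pt f x.
Proof.
  intros H. apply continuity_pt_filterlim.
  assert (C : continuous f x) by (exact (@ex_derive_continuous R_AbsRing R_NormedModule f x (ex_intro _ l H))).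
  exact C.
Qed.

Lemma phic_cont a phi (hC0 : C0_closed a phi) (ha : 0 < a) s (hs : 0 < s) :
  continuous (fun y => phi (Rmin y a)) s.
Proof.
  apply continuity_pt_filterlim. apply epsdelta_cpt. intros eps Heps.
  assert (Hm : 0 <= Rmin s a <= a).
  { split; [apply Rmin_glb; lra | apply Rmin_r]. }
  destruct (hC0 (Rmin s a) Hm eps Heps) as [d [Hd Hy]].
  exists (Rmin d s). split; [apply Rmin_glb_lt; lra|].
  intros y Hyx. apply Hy.
  - assert (Rmin d s <= s) by apply Rmin_r.
    assert (0 < y) by (unfold Rabs in Hyx; destruct Rcase_abs; lra).
    split; [apply Rmin_glb; lra | apply Rmin_r].
  - eapply Rle_lt_trans; [apply Rmin_lip|].
    eapply Rlt_le_trans; [exact Hyx| apply Rmin_l].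
Qed.

Lemma rpow_cont e x (hx : 0 < x) : continuous (fun y => exp (e * ln y)) x.
Proof.
  apply (@ex_derive_continuous R_AbsRing R_NormedModule (fun y => exp (e * ln y)) x).
  auto_derive. auto.
Qed.

Lemma d_rpow (phi : R -> R) (x e : R) : ex_derive phi x -> 0 < phi x ->
  is_derive (fun s => Rpower (phi s) e) x (e * (Derive phi x / phi x) * Rpower (phi x) e).
Proof.
  intros H1 H2. unfold Rpower. auto_derive.
  - auto.
  - change (Derive (fun x0 : R => phi x0) x) with (Derive phi x). unfold Rdiv. ring.
Qed.

Lemma rpow_antitone x y e : 0 < x -> x <= y -> e <= 0 -> Rpower y e <= Rpower x e.
Proof.
  intros Hx Hxy He. unfold Rpower.
  assert (ln x <= ln y) by (apply ln_le; lra).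
  assert (e * ln y <= e * ln x) by nra.
  destruct (Rle_lt_or_eq_dec _ _ H0) as [Hl|Hq].
  - left; apply exp_increasing; exact Hl.
  - rewrite Hq; lra.
Qed.

Lemma MVT_simple (f df : R -> R) (x y : R) : x < y ->
  (forall z, x <= z <= y -> is_derive f z (df z)) ->
  exists c, x <= c <= y /\ f y - f x = df c * (y - x).
Proof.
  intros Hxy Hd.
  pose proof (MVT_gen f x y df) as H. cbv zeta in H.
  rewrite Rmin_left, Rmax_right in H by lra.
  apply H.
  - intros z Hz; apply Hd; lra.
  - intros z Hz; eapply der_cpt; apply Hd; lra.
Qed.

Lemma incr_strict (f df : R -> R) (l r : R) :
  (forall x, l < x < r -> is_derive f x (df x)) -> (forall x, l < x < r -> 0 < df x) ->
  forall x y, l < x -> x < y -> y < r -> f x < f y.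
Proof.
  intros Hd Hp x y Hx Hxy Hy.
  destruct (MVT_simple f df x y Hxy) as [c [Hc Heq]].
  - intros z Hz; apply Hd; lra.
  - assert (0 < df c) by (apply Hp; lra). nra.
Qed.

Lemma incr_weak (f df : R -> R) (l r : R) :
  (forall x, l < x < r -> is_derive f x (df x)) -> (forall x, l < x < r -> 0 <= df x) ->
  forall x y, l < x -> x <= y -> y < r -> f x <= f y.
Proof.
  intros Hd Hp x y Hx Hxy Hy.
  destruct (Rle_lt_or_eq_dec _ _ Hxy) as [Hl|<-]; [|lra].
  destruct (MVT_simple f df x y Hl) as [c [Hc Heq]].
  - intros z Hz; apply Hd; lra.
  - assert (0 <= df c) by (apply Hp; lra). nra.
Qed.

Lemma decr_weak (f df : R -> R) (l r : R) :
  (forall x, l < x < r -> is_derive f x (df x)) -> (forall x, l < x < r -> df x <= 0) ->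
  forall x y, l < x -> x <= y -> y < r -> f y <= f x.
Proof.
  intros Hd Hp x y Hx Hxy Hy.
  destruct (Rle_lt_or_eq_dec _ _ Hxy) as [Hl|<-]; [|lra].
  destruct (MVT_simple f df x y Hl) as [c [Hc Heq]].
  - intros z Hz; apply Hd; lra.
  - assert (df c <= 0) by (apply Hp; lra). nra.
Qed.

Lemma is_derive_g (f1 f2 f3 : R -> R) (x d1 d2 d3 e : R) :
  is_derive f1 x d1 -> is_derive f2 x d2 -> is_derive f3 x d3 ->
  is_derive (fun t => f1 t + e * f2 t * f3 t) x (d1 + e * (d2 * f3 x + f2 x * d3)).
Proof.
  intros H1 H2 H3. auto_derive.
  - repeat split; [exists d1|exists d2|exists d3]; assumption.
  - change (Derive (fun x0 : R => f1 x0) x) with (Derive f1 x).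
    change (Derive (fun x0 : R => f2 x0) x) with (Derive f2 x).
    change (Derive (fun x0 : R => f3 x0) x) with (Derive f3 x).
    rewrite (is_derive_unique f1 x d1 H1), (is_derive_unique f2 x d2 H2),
      (is_derive_unique f3 x d3 H3). ring.
Qed.

Lemma psic_cont a phi e (hC0 : C0_closed a phi) (ha : 0 < a)
  (hpos : forall t, 0 < t <= a -> 0 < phi t) s (hs : 0 < s) :
  continuous (fun y => Rpower (phi (Rmin y a)) e) s.
Proof.
  unfold Rpower.
  apply (continuous_comp (fun y => phi (Rmin y a)) (fun z => exp (e * ln z))).
  - apply phic_cont; assumption.
  - apply rpow_cont. apply hpos. split; [apply Rmin_glb_lt; lra| apply Rmin_r].
Qed.

Lemma psic_exRInt a phi e (hC0 : C0_closed a phi) (ha : 0 < a)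
  (hpos : forall t, 0 < t <= a -> 0 < phi t) u v (hu : 0 < u) (hv : 0 < v) :
  ex_RInt (fun y => Rpower (phi (Rmin y a)) e) u v.
Proof.
  apply (@ex_RInt_continuous R_CompleteNormedModule). intros z Hz. apply psic_cont; try assumption.
  assert (0 < Rmin u v) by (apply Rmin_glb_lt; lra). lra.
Qed.

Lemma I_derive a phi e (hC0 : C0_closed a phi) (ha : 0 < a)
  (hpos : forall t, 0 < t <= a -> 0 < phi t) t (ht : 0 < t) :
  is_derive (fun u => RInt (fun y => Rpower (phi (Rmin y a)) e) u a) t
    (- Rpower (phi (Rmin t a)) e).
Proof.
  apply (is_derive_RInt' (fun y => Rpower (phi (Rmin y a)) e)
     (fun u => RInt (fun y => Rpower (phi (Rmin y a)) e) u a) t a).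
  - exists (mkposreal t ht). intros u Hu. apply (@RInt_correct R_CompleteNormedModule).
    apply psic_exRInt; try assumption.
    unfold ball in Hu; simpl in Hu; unfold AbsRing_ball, abs, minus, plus, opp in Hu; simpl in Hu.
    unfold Rabs in Hu; destruct Rcase_abs; lra.
  - apply psic_cont; assumption.
Qed.

Lemma exp_le_mono x y : x <= y -> exp x <= exp y.
Proof.
  intros H. destruct (Rle_lt_or_eq_dec _ _ H) as [Hl|<-].
  - left; apply exp_increasing; exact Hl.
  - lra.
Qed.

Theorem lemma2p4 (a p c1 c2 delta : R) (phi : R -> R)
  (ha : 0 < a) (hp : 1 < p)
  (hC1 : C1_half_open a phi) (hC0 : C0_closed a phi)
  (h0 : phi 0 = 0)
  (hpos : forall t, 0 < t <= a -> 0 < phi t)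
  (hc1 : 0 < c1) (hc2 : 0 < c2) (hdelta : 0 < delta)
  (hbounds : forall t, 0 < t <= a ->
     c1 * Rpower t (p - 1 + delta) <= phi t /\ phi t <= c2 * Rpower t (p - 1 + delta))
  (htwice : forall t, 0 < t < a -> ex_derive phi t /\ ex_derive (Derive phi) t)
  (hlogconc : forall t, 0 < t < a ->
     Derive (fun s => Derive phi s / phi s) t < 0) :
  exists! T : R, 0 < T < a /\
    (forall t, 0 < t < T -> Derive (eta_a a p phi) t < 0) /\
    (forall t, T < t < a -> 0 < Derive (eta_a a p phi) t).
Proof.
  pose (e := - / (p - 1)).
  assert (he : e < 0).
  { unfold e. assert (0 < / (p-1)) by (apply Rinv_0_lt_compat; lra). lra. }
  pose (psi := fun s => Rpower (phi s) e).
  pose (psic := fun s => Rpower (phi (Rmin s a)) e).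
  pose (I := fun u => RInt psic u a).
  pose (h := fun s => Derive phi s / phi s).
  pose (g := fun t => psi t + e * h t * I t).
  assert (Hpsipos : forall t, 0 < psi t) by (intros; unfold psi, Rpower; apply exp_pos).
  assert (HId : forall t, 0 < t -> is_derive I t (- psic t)) by (intros; apply I_derive; auto).
  assert (Hpsic : forall t, t <= a -> psic t = psi t)
    by (intros; unfold psic, psi; rewrite Rmin_left; auto).
  assert (HIa : I a = 0) by (unfold I; rewrite RInt_point; reflexivity).
  assert (HIpos : forall t, 0 < t < a -> 0 < I t).
  { intros t Ht.
    destruct (MVT_simple I (fun u => - psic u) t a) as [c [Hc Heq]];
      [lra| intros; apply HId; lra |].
    assert (0 < psic c) by (unfold psic, Rpower; apply exp_pos).
    rewrite HIa in Heq. nra. }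
  assert (Heta_eq : forall t, 0 < t < a -> eta_a a p phi t = psi t / I t).
  { intros t Ht. unfold eta_a, I, psi, e. f_equal. apply RInt_ext.
    intros x Hx. rewrite Rmin_left, Rmax_right in Hx by lra. unfold psic.
    rewrite (Rmin_left x a) by lra. reflexivity. }
  assert (Hphid : forall t, 0 < t < a -> ex_derive phi t) by (intros; apply htwice; auto).
  assert (Hpsid : forall t, 0 < t < a -> is_derive psi t (e * h t * psi t)).
  { intros t Ht. unfold psi, h. apply d_rpow; [apply Hphid; auto| apply hpos; lra]. }
  assert (Hhd : forall t, 0 < t < a -> is_derive h t (Derive h t)).
  { intros t Ht. apply Derive_correct. unfold h.
    apply ex_derive_div; [apply htwice; auto | apply Hphid; auto |].
    apply Rgt_not_eq, hpos; lra. }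
  assert (Hhneg : forall t, 0 < t < a -> Derive h t < 0) by (intros; unfold h; apply hlogconc; auto).
  assert (Hgd : forall t, 0 < t < a -> is_derive g t (e * Derive h t * I t)).
  { intros t Ht.
    assert (H := is_derive_g psi h I t _ _ _ e (Hpsid t Ht) (Hhd t Ht) (HId t ltac:(lra))).
    rewrite (Hpsic t ltac:(lra)) in H.
    replace (e * Derive h t * I t) with (e * h t * psi t + e * (Derive h t * I t + h t * - psi t)) by ring.
    exact H. }
  assert (Hgpos : forall t, 0 < t < a -> 0 < e * Derive h t * I t).
  { intros t Ht. assert (Derive h t < 0) by auto. assert (0 < I t) by auto.
    assert (0 < e * Derive h t) by nra. nra. }
  assert (Hetad : forall t, 0 < t < a -> is_derive (eta_a a p phi) t (psi t * g t / (I t)^2)).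
  { intros t Ht.
    apply (is_derive_ext_loc (fun s => psi s / I s)).
    - assert (Hr : 0 < Rmin t (a - t)) by (apply Rmin_glb_lt; lra).
      exists (mkposreal _ Hr). intros y Hy. symmetry. apply Heta_eq.
      unfold ball in Hy; simpl in Hy; unfold AbsRing_ball, abs, minus, plus, opp in Hy; simpl in Hy.
      assert (Rmin t (a - t) <= t) by apply Rmin_l.
      assert (Rmin t (a - t) <= a - t) by apply Rmin_r.
      unfold Rabs in Hy; destruct Rcase_abs; lra.
    - assert (HI0 : I t <> 0) by (apply Rgt_not_eq, HIpos; lra).
      assert (H := is_derive_div psi I t _ _ (Hpsid t Ht) (HId t ltac:(lra)) HI0).
      rewrite (Hpsic t ltac:(lra)) in H.
      replace (psi t * g t / I t ^ 2) with ((e * h t * psi t * I t - psi t * - psi t) / I t ^ 2).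
      + exact H.
      + unfold g. field. exact HI0. }
  assert (Hsign_neg : forall t, 0 < t < a -> g t < 0 -> Derive (eta_a a p phi) t < 0).
  { intros t Ht Hg. rewrite (is_derive_unique _ _ _ (Hetad t Ht)).
    assert (0 < / (I t ^ 2)) by (apply Rinv_0_lt_compat, pow_lt, HIpos; auto).
    assert (psi t * g t < 0) by (pose proof (Hpsipos t); nra).
    unfold Rdiv. nra. }
  assert (Hsign_pos : forall t, 0 < t < a -> 0 < g t -> 0 < Derive (eta_a a p phi) t).
  { intros t Ht Hg. rewrite (is_derive_unique _ _ _ (Hetad t Ht)).
    assert (0 < / (I t ^ 2)) by (apply Rinv_0_lt_compat, pow_lt, HIpos; auto).
    assert (0 < psi t * g t) by (pose proof (Hpsipos t); nra).
    unfold Rdiv. nra. }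
  assert (Hginc := incr_strict g _ 0 a Hgd Hgpos).
  assert (Ht1 : exists t1, 0 < t1 < a /\ g t1 < 0).
  { apply NNPP. intro Hn.
    assert (Hge : forall t, 0 < t < a -> 0 <= g t).
    { intros t Ht. apply Rnot_lt_le. intro Hl. apply Hn. exists t; auto. }
    pose (t0 := a / 2). pose (K := psi t0 / I t0).
    assert (Ht0 : 0 < t0 < a) by (unfold t0; lra).
    assert (HK : forall t, 0 < t <= t0 -> psi t / I t <= K).
    { intros t Ht. rewrite <- Heta_eq by lra. unfold K. rewrite <- Heta_eq by lra.
      apply (incr_weak (eta_a a p phi) (fun t => psi t * g t / (I t)^2) 0 a); try lra.
      - exact Hetad.
      - intros x Hx. unfold Rdiv. apply Rmult_le_pos.
        + apply Rmult_le_pos; [left; apply Hpsipos| apply Hge; auto].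
        + left; apply Rinv_0_lt_compat, pow_lt, HIpos; auto. }
    assert (HKpos : 0 < K) by (unfold K; apply Rdiv_lt_0_compat; [apply Hpsipos| apply HIpos; lra]).
    pose (L := fun s => ln (I s)).
    assert (HLd : forall s, 0 < s < a -> is_derive L s (- (psi s / I s))).
    { intros s Hs. unfold L.
      assert (HIs : 0 < I s) by auto.
      assert (Hln : is_derive (fun x => ln x) (I s) (/ I s)).
      { auto_derive; [exact HIs| ring]. }
      pose proof (is_derive_comp (fun x => ln x) I s _ _ Hln (HId s ltac:(lra))) as Hc.
      rewrite (Hpsic s ltac:(lra)) in Hc.
      replace (- (psi s / I s)) with (scal (- psi s) (/ I s)).
      + exact Hc.
      + unfold scal; simpl; unfold mult; simpl. field. lra. }
    pose (B := exp (L t0 + K * t0)).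
    assert (HBpos : 0 < B) by apply exp_pos.
    assert (HB : forall t, 0 < t <= t0 -> psi t <= K * B).
    { intros t Ht.
      assert (HLt : L t <= L t0 + K * t0).
      { destruct (Rle_lt_or_eq_dec _ _ (proj2 Ht)) as [Hlt|Heq].
        - destruct (MVT_simple L (fun s => - (psi s / I s)) t t0 Hlt) as [c [Hc HeqL]].
          + intros z Hz; apply HLd; lra.
          + assert (psi c / I c <= K) by (apply HK; lra).
            assert (0 <= psi c / I c) by (left; apply Rdiv_lt_0_compat; [apply Hpsipos| apply HIpos; lra]).
            nra.
        - rewrite Heq. nra. }
      assert (HIt : 0 < I t) by (apply HIpos; lra).
      assert (HItB : I t <= B).
      { unfold B. rewrite <- (exp_ln (I t)) by exact HIt. apply exp_le_mono. exact HLt. }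
      assert (Hq : psi t / I t <= K) by (apply HK; exact Ht).
      assert (Hpq : psi t = (psi t / I t) * I t) by (field; lra).
      assert (0 <= psi t / I t) by (left; apply Rdiv_lt_0_compat; [apply Hpsipos| exact HIt]).
      rewrite Hpq. nra. }
    assert (HKB : 0 < K * B + 1) by nra.
    pose (eps0 := exp (ln (K * B + 1) / e)).
    assert (Heps0 : 0 < eps0) by apply exp_pos.
    destruct (hC0 0 (conj (Rle_refl 0) (Rlt_le _ _ ha)) eps0 Heps0) as [d [Hd Hy]].
    pose (t := Rmin d t0 / 2).
    assert (Hmin1 : Rmin d t0 <= d) by apply Rmin_l.
    assert (Hmin2 : Rmin d t0 <= t0) by apply Rmin_r.
    assert (Hmin0 : 0 < Rmin d t0) by (apply Rmin_glb_lt; lra).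
    assert (Ht : 0 < t <= t0) by (unfold t; lra).
    assert (Hphit : phi t < eps0).
    { assert (Hpt : 0 < phi t) by (apply hpos; lra).
      pose proof (Hy t ltac:(lra) ltac:(rewrite Rminus_0_r, Rabs_right; unfold t; lra)) as Hyt.
      rewrite h0, Rminus_0_r, Rabs_right in Hyt by lra. exact Hyt. }
    assert (Hlnt : ln (phi t) < ln (K * B + 1) / e).
    { unfold eps0 in Hphit. rewrite <- (ln_exp (ln (K * B + 1) / e)).
      apply ln_increasing; [apply hpos; lra| exact Hphit]. }
    assert (Hmul : e * (ln (K * B + 1) / e) = ln (K * B + 1)) by (field; lra).
    assert (Hgt : ln (K * B + 1) < e * ln (phi t)) by nra.
    assert (Hpsit : K * B + 1 < psi t).
    { unfold psi, Rpower. rewrite <- (exp_ln (K * B + 1)) at 1 by lra.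
      apply exp_increasing. exact Hgt. }
    pose proof (HB t Ht). lra. }
  assert (Ht2 : exists t2, 0 < t2 < a /\ 0 < g t2).
  { apply NNPP. intro Hn.
    assert (Hle : forall t, 0 < t < a -> g t <= 0).
    { intros t Ht. apply Rnot_lt_le. intro Hl. apply Hn. exists t; auto. }
    pose (t0 := a / 2). pose (K := psi t0 / I t0).
    assert (Ht0 : 0 < t0 < a) by (unfold t0; lra).
    assert (HK : forall t, t0 <= t < a -> psi t / I t <= K).
    { intros t Ht. rewrite <- Heta_eq by lra. unfold K. rewrite <- Heta_eq by lra.
      apply (decr_weak (eta_a a p phi) (fun t => psi t * g t / (I t)^2) 0 a); try lra.
      - exact Hetad.
      - intros x Hx. unfold Rdiv.
        assert (0 < / (I x ^ 2)) by (apply Rinv_0_lt_compat, pow_lt, HIpos; auto).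
        assert (g x <= 0) by auto. pose proof (Hpsipos x).
        assert (psi x * g x <= 0) by nra. nra. }
    assert (HKpos : 0 < K) by (unfold K; apply Rdiv_lt_0_compat; [apply Hpsipos| apply HIpos; lra]).
    pose (m := Rpower (c2 * Rpower a (p - 1 + delta)) e).
    assert (Hmpos : 0 < m) by (unfold m, Rpower; apply exp_pos).
    assert (Hm : forall t, 0 < t <= a -> m <= psi t).
    { intros t Ht. unfold m, psi. apply rpow_antitone; [apply hpos; auto| |lra].
      eapply Rle_trans; [apply (hbounds t Ht)|].
      apply Rmult_le_compat_l; [lra|]. apply Rle_Rpower_l; lra. }
    destruct (cpt_epsdelta I a (der_cpt I a _ (HId a ha)) (m / K)
      ltac:(apply Rdiv_lt_0_compat; lra)) as [d [Hd Hy]].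
    pose (t := Rmax t0 (a - d / 2)).
    assert (Hx1 : t0 <= t) by apply Rmax_l.
    assert (Hx2 : a - d / 2 <= t) by apply Rmax_r.
    assert (Hx3 : t < a) by (apply Rmax_lub_lt; lra).
    pose proof (Hy t ltac:(rewrite Rabs_left; lra)) as Hyt.
    rewrite HIa, Rminus_0_r in Hyt.
    assert (HIt : 0 < I t) by (apply HIpos; lra).
    rewrite Rabs_right in Hyt by lra.
    assert (Hq : psi t / I t <= K) by (apply HK; lra).
    assert (Hpq : psi t = (psi t / I t) * I t) by (field; lra).
    assert (0 <= psi t / I t) by (left; apply Rdiv_lt_0_compat; [apply Hpsipos| exact HIt]).
    assert (HKm : K * (m / K) = m) by (field; lra).
    assert (psi t < m) by (rewrite Hpq; nra).
    pose proof (Hm t ltac:(lra)). lra. }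
  destruct Ht1 as [t1 [Ht1 Hg1]], Ht2 as [t2 [Ht2 Hg2]].
  assert (Ht12 : t1 < t2).
  { destruct (Rlt_or_le t1 t2) as [Hl|Hl]; auto. exfalso.
    destruct (Rle_lt_or_eq_dec t2 t1 Hl) as [Hl'|He].
    - pose proof (Hginc t2 t1 ltac:(lra) Hl' ltac:(lra)). lra.
    - subst; lra. }
  destruct (IVT_interv g t1 t2) as [T [HT HgT]]; auto.
  { intros z Hz. apply (der_cpt g z (e * Derive h z * I z)). apply Hgd; lra. }
  exists T. split.
  - split; [lra|]. split.
    + intros t Ht. apply Hsign_neg; [lra|]. rewrite <- HgT. apply Hginc; lra.
    + intros t Ht. apply Hsign_pos; [lra|]. rewrite <- HgT. apply Hginc; lra.
  - intros T' [HT' [H1 H2]].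
    destruct (Rtotal_order T T') as [Hl|[He|Hg]]; auto; exfalso.
    + assert (A1 : 0 < Derive (eta_a a p phi) ((T + T') / 2))
        by (apply Hsign_pos; [lra|]; rewrite <- HgT; apply Hginc; lra).
      assert (A2 := H1 ((T + T') / 2) ltac:(lra)). lra.
    + assert (A1 : Derive (eta_a a p phi) ((T + T') / 2) < 0)
        by (apply Hsign_neg; [lra|]; rewrite <- HgT; apply Hginc; lra).
      assert (A2 := H2 ((T + T') / 2) ltac:(lra)). lra.
Qed.
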